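(* Let $W,V$ be subspaces of $\mathbb{C}^n$ with $\mathbb{C}^n=W\oplus V^\perp$, let $\{\mathbf{w}_i\}_{i=1}^N$ be a frame for $W$ with frame operator $\mathbf{S}=\sum_{i=1}^N\mathbf{w}_i\mathbf{w}_i^*$, and let $\{\mathbf{v}_i\}_{i=1}^N$ be an oblique dual frame of $\{\mathbf{w}_i\}_{i=1}^N$ on $V$ such that $\langle\mathbf{w}_i,\mathbf{v}_i\rangle=\langle\mathbf{w}_j,\mathbf{v}_j\rangle$ for all $i,j$. Let $p=2k$ where $k\ge1$, and let $d_W=\dim W$. Then $$\sum_{i=1}^N\sum_{j=1}^N|\langle\mathbf{w}_i,\mathbf{v}_j\rangle|^p\ge\frac{\left|d_W-\frac{d_W^2}{N}\right|^{p/2}}{N^{\frac p2-1}(N-1)^{\frac p2-1}}+\frac{d_W^p}{N^{p-1}}.$$ Furthermore, when $k>1$, equality holds if and only if $|\langle\mathbf{w}_i,\mathbf{v}_j\rangle|$ is constant over all $i\ne j$ and $\mathbf{v}_j=\boldsymbol{\pi}_{VW^\perp}\mathbf{S}^\dagger\mathbf{w}_j$ for each $j$.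
   Context: The inner product on $\mathbb{C}^n$ is $\langle\mathbf{x},\mathbf{y}\rangle=\mathbf{y}^*\mathbf{x}$. $\mathbf{S}^\dagger$ is the Moore–Penrose inverse. When $\mathbb{C}^n=W\oplus V^\perp$ (equivalently $\mathbb{C}^n=V\oplus W^\perp$), $\boldsymbol{\pi}_{WV^\perp}$ is the oblique projection onto $W$ along $V^\perp$ and $\boldsymbol{\pi}_{VW^\perp}$ the oblique projection onto $V$ along $W^\perp$. A finite family in $W$ is a frame for $W$ if it spans $W$. A frame $\{\mathbf{v}_i\}_{i=1}^N\subset V$ for $V$ is an oblique dual frame of $\{\mathbf{w}_i\}$ on $V$ if $\boldsymbol{\pi}_{WV^\perp}\mathbf{f}=\sum_{i=1}^N\langle\mathbf{f},\mathbf{v}_i\rangle\mathbf{w}_i$ for all $\mathbf{f}\in\mathbb{C}^n$. *)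

(* Defs.v *)
(* C^n is modelled as row vectors 'rV[R[i]]_n over the
   complex numbers R[i] of an arbitrary real field R : realType. *)
From Stdlib Require Import ClassicalEpsilon.
From mathcomp Require Import all_boot all_algebra.
From mathcomp Require Import reals complex.
Set Implicit Arguments. Unset Strict Implicit. Unset Printing Implicit Defensive.
Import GRing.Theory Num.Theory.
Local Open Scope ring_scope.

Section Defs.
Variable C : numClosedFieldType.

Definition adjmx m p (A : 'M[C]_(m, p)) : 'M[C]_(p, m) := (map_mx Num.conj A)^T.

Definition inprod n (x y : 'rV[C]_n) : C := (x *m adjmx y) 0 0.

Definition orthc n (V : 'M[C]_n) : 'M[C]_n := kermx (adjmx V).

Definition direct_sum_perp n (W V : 'M[C]_n) : Prop :=
  (W :&: orthc V == (0 : 'M[C]_n))%MS /\ (W + orthc V == (1%:M : 'M[C]_n))%MS.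

(* oblique projection onto U along Z^perp, acting on row vectors f |-> f *m P *)
Definition oblique_proj n (U Z : 'M[C]_n) : 'M[C]_n := proj_mx U (orthc Z).

Definition is_frame_for n N (U : 'M[C]_n) (w : 'I_N -> 'rV[C]_n) : Prop :=
  (\sum_(i < N) <<w i>> == U)%MS.

(* frame operator S = sum_i w_i w_i^*, in row-vector convention:
   f *m frame_op w = sum_i <f, w_i> w_i *)
Definition frame_op n N (w : 'I_N -> 'rV[C]_n) : 'M[C]_n :=
  \sum_(i < N) adjmx (w i) *m w i.

Definition is_mpinv n (A X : 'M[C]_n) : Prop :=
  [/\ A *m X *m A = A, X *m A *m X = X,
      adjmx (A *m X) = A *m X & adjmx (X *m A) = X *m A].

Definition mpinv n (A : 'M[C]_n) : 'M[C]_n :=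
  epsilon (inhabits 0) (is_mpinv A).

Definition is_oblique_dual n N (W V : 'M[C]_n) (w v : 'I_N -> 'rV[C]_n) : Prop :=
  is_frame_for V v /\
  forall f : 'rV[C]_n, f *m oblique_proj W V = \sum_(i < N) inprod f (v i) *: w i.

End Defs.

(* Main.v *)
Require Import Defs.
From mathcomp Require Import all_boot all_algebra.
From mathcomp Require Import reals complex.
From mathcomp Require Import all_order zify ring.
From Stdlib Require Import ClassicalEpsilon.
Import Order.TTheory GRing.Theory Num.Theory.
Local Open Scope ring_scope.

Set Implicit Arguments. Unset Strict Implicit. Unset Printing Implicit Defensive.

Section LA.
Variable C : numClosedFieldType.
Implicit Types (m p q : nat).

Lemma adjmxE m p (A : 'M[C]_(m, p)) i j : adjmx A i j = (A j i)^*.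
Proof. by rewrite /adjmx !mxE. Qed.

Lemma adjmxK m p (A : 'M[C]_(m, p)) : adjmx (adjmx A) = A.
Proof. by apply/matrixP => i j; rewrite !adjmxE conjCK. Qed.

Lemma adjmxM m p q (A : 'M[C]_(m, p)) (B : 'M[C]_(p, q)) :
  adjmx (A *m B) = adjmx B *m adjmx A.
Proof. by rewrite /adjmx map_mxM trmx_mul. Qed.

Lemma adjmxD m p (A B : 'M[C]_(m, p)) : adjmx (A + B) = adjmx A + adjmx B.
Proof. by apply/matrixP => i j; rewrite !(adjmxE, mxE) rmorphD. Qed.

Lemma adjmxN m p (A : 'M[C]_(m, p)) : adjmx (- A) = - adjmx A.
Proof. by apply/matrixP => i j; rewrite !(adjmxE, mxE) rmorphN. Qed.

Lemma adjmxB m p (A B : 'M[C]_(m, p)) : adjmx (A - B) = adjmx A - adjmx B.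
Proof. by rewrite adjmxD adjmxN. Qed.

Lemma adjmx0 m p : adjmx (0 : 'M[C]_(m, p)) = 0.
Proof. by apply/matrixP => i j; rewrite !(adjmxE, mxE) rmorph0. Qed.

Lemma adjmx1 m : adjmx (1%:M : 'M[C]_m) = 1%:M.
Proof. by apply/matrixP => i j; rewrite !(adjmxE, mxE) eq_sym rmorph_nat. Qed.

Lemma mxrank_adj m p (A : 'M[C]_(m, p)) : \rank (adjmx A) = \rank A.
Proof. by rewrite /adjmx mxrank_tr mxrank_map. Qed.

Lemma mxadj_eq0 m p (M : 'M[C]_(m, p)) : M *m adjmx M = 0 -> M = 0.
Proof.
move=> H; apply/matrixP => i j; rewrite mxE.
have /matrixP/(_ i i) := H; rewrite !mxE => /eqP.
under eq_bigr do rewrite adjmxE -normCK.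
rewrite psumr_eq0 => [/allP/(_ j (mem_index_enum _))|k _]; last exact: exprn_ge0.
by rewrite /= sqrf_eq0 normr_eq0 => /eqP.
Qed.


Lemma adjmx_inv m (A : 'M[C]_m) : adjmx (invmx A) = invmx (adjmx A).
Proof. by rewrite /adjmx map_invmx trmx_inv. Qed.

Lemma unit_adj r m (M : 'M[C]_(r, m)) : row_free M -> M *m adjmx M \in unitmx.
Proof.
move=> fM; rewrite -row_free_unit -kermx_eq0; apply/rowV0P => u /sub_kermxP H.
have H1 : (u *m M) *m adjmx (u *m M) = 0.
  by rewrite adjmxM !mulmxA -(mulmxA u) H mul0mx.
apply: (row_free_inj fM); rewrite mul0mx; exact: mxadj_eq0 H1.
Qed.

Lemma mp_exists_fact m r (B : 'M[C]_(m, r)) (D : 'M[C]_(r, m)) :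
  row_free D -> row_free (adjmx B) -> exists X, is_mpinv (B *m D) X.
Proof.
move=> fD fB.
have uD := unit_adj fD; have uB := unit_adj fB; rewrite adjmxK in uB.
set P := invmx (D *m adjmx D); set Q := invmx (adjmx B *m B).
have hP : adjmx P = P by rewrite adjmx_inv adjmxM adjmxK.
have hQ : adjmx Q = Q by rewrite adjmx_inv adjmxM adjmxK.
have eP : D *m adjmx D *m P = 1%:M by rewrite mulmxV.
have eQ : Q *m (adjmx B *m B) = 1%:M by rewrite mulVmx.
exists (adjmx D *m P *m Q *m adjmx B).
have AX : B *m D *m (adjmx D *m P *m Q *m adjmx B) = B *m Q *m adjmx B.
  by rewrite -!mulmxA (mulmxA D) (mulmxA (D *m _)) eP mul1mx.
have XA : (adjmx D *m P *m Q *m adjmx B) *m (B *m D) = adjmx D *m P *m D.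
  by rewrite -!mulmxA (mulmxA (adjmx B)) (mulmxA Q) eQ mul1mx.
split.
- by rewrite AX -!mulmxA (mulmxA (adjmx B)) (mulmxA Q) eQ mul1mx.
- rewrite XA -!mulmxA (mulmxA D) (mulmxA (D *m _)) eP mul1mx.
  by rewrite !mulmxA.
- by rewrite AX !adjmxM adjmxK hQ mulmxA.
- by rewrite XA !adjmxM adjmxK hP mulmxA.
Qed.

Lemma mp_exists m (A : 'M[C]_m) : exists X, is_mpinv A X.
Proof.
rewrite -(mulmx_base A); apply: mp_exists_fact; first exact: row_base_free.
by rewrite /row_free mxrank_adj; exact: col_base_full.
Qed.

Lemma mp_unique m (A X Y : 'M[C]_m) : is_mpinv A X -> is_mpinv A Y -> X = Y.
Proof.
move=> [X1 X2 X3 X4] [Y1 Y2 Y3 Y4].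
have e1 : adjmx A = adjmx A *m A *m Y.
  by rewrite -{1}Y1 adjmxM Y3 mulmxA.
have e2 : adjmx A = X *m A *m adjmx A.
  by rewrite -{1}X1 -mulmxA adjmxM X4.
have -> : X = X *m A *m Y.
  transitivity (X *m adjmx (A *m X)); first by rewrite X3 mulmxA X2.
  rewrite adjmxM mulmxA e1 !mulmxA -(mulmxA X (adjmx X)) -adjmxM X3.
  by rewrite (mulmxA X A X) X2.
symmetry; transitivity (adjmx (Y *m A) *m Y); first by rewrite Y4 Y2.
rewrite adjmxM e2 -!mulmxA (mulmxA (adjmx A)) -adjmxM Y4.
by rewrite Y2.
Qed.

Lemma mpinv_spec m (A : 'M[C]_m) : is_mpinv A (mpinv A).
Proof. exact: ClassicalEpsilon.epsilon_spec (mp_exists A). Qed.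

Lemma mpinv_herm m (A : 'M[C]_m) : adjmx A = A -> adjmx (mpinv A) = mpinv A.
Proof.
move=> hA; apply: mp_unique (mpinv_spec A).
have [X1 X2 X3 X4] := mpinv_spec A.
move: X1 X2 X3 X4; set X := mpinv A => X1 X2 X3 X4.
split.
- by have := congr1 (@adjmx _ _ _) X1; rewrite !adjmxM hA mulmxA.
- by have := congr1 (@adjmx _ _ _) X2; rewrite !adjmxM hA mulmxA.
- by rewrite adjmxM adjmxK hA -[in RHS]hA -adjmxM X4.
- by rewrite adjmxM adjmxK hA -[in RHS]hA -adjmxM X3.
Qed.


Lemma mx_ext_row m (A B : 'M[C]_m) : (forall f : 'rV_m, f *m A = f *m B) -> A = B.
Proof. by move=> H; apply/row_matrixP => i; rewrite !rowE H. Qed.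

Lemma orth_mul m p q (K : 'M[C]_(p, m)) (U : 'M[C]_(q, m)) r (Y : 'M[C]_(r, m)) :
  K *m adjmx U = 0 -> (Y <= U)%MS -> K *m adjmx Y = 0.
Proof. by move=> H /submxP[a ->]; rewrite adjmxM mulmxA H mul0mx. Qed.

Lemma orthc_mul m (U : 'M[C]_m) : orthc U *m adjmx U = 0.
Proof. by apply/sub_kermxP; rewrite submx_refl. Qed.

Lemma proj_uniq m (U Z M : 'M[C]_m) : (U :&: Z)%MS = 0 -> (U + Z == 1%:M)%MS ->
  U *m M = U -> Z *m M = 0 -> M = proj_mx U Z.
Proof.
move=> cap /andP[_ full] hU hZ.
have /sub_addsmxP[[a b] /= e] : (1%:M <= U + Z)%MS by [].
rewrite -(mul1mx M) -(mul1mx (proj_mx U Z)) e !mulmxDl -!mulmxA hU hZ.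
by rewrite proj_mx_id ?proj_mx_0 ?submx_refl.
Qed.

Lemma tr_idem_fact m r (B : 'M[C]_(m, r)) (D : 'M[C]_(r, m)) :
  row_full B -> row_free D -> B *m D *m (B *m D) = B *m D -> \tr (B *m D) = r%:R.
Proof.
move=> /row_fullP[L eL] fD e.
have e1 : B *m D *m B = B by apply: (row_free_inj fD); rewrite /= -(mulmxA (B *m D)) e.
have e2 : D *m B = 1%:M by move: (congr1 (mulmx L) e1); rewrite !mulmxA eL !mul1mx.
by rewrite mxtrace_mulC e2 mxtrace1.
Qed.

Lemma tr_idem m (P : 'M[C]_m) : P *m P = P -> \tr P = (\rank P)%:R.
Proof.
move=> e; have := @tr_idem_fact _ _ (col_base P) (row_base P) (col_base_full P) (row_base_free P).
by rewrite mulmx_base; apply.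
Qed.


Lemma frame_mx m N (U : 'M[C]_m) (u : 'I_N -> 'rV[C]_m) :
  is_frame_for U u -> ((\matrix_i u i) == U)%MS.
Proof.
move=> /eqmxP eU; apply/eqmxP; apply: eqmx_trans _ eU; apply/eqmxP/andP; split.
  apply/row_subP => i; rewrite rowK; apply: (sumsmx_sup i) => //.
  by rewrite genmxE submx_refl.
apply/sumsmx_subP => i _; rewrite genmxE -(rowK u i); exact: row_sub.
Qed.

Lemma dual_direct m (W V : 'M[C]_m) : direct_sum_perp W V ->
  (V :&: orthc W)%MS = 0 /\ (V + orthc W == 1%:M)%MS.
Proof.
move=> [/eqmx0P cap full].
have hVO : V *m adjmx (orthc V) = 0.
  by rewrite -[LHS]adjmxK adjmxM adjmxK orthc_mul adjmx0.
have cap' : (V :&: orthc W)%MS = 0.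
  have yV := capmxSl V (orthc W); have yW := capmxSr V (orthc W).
  move: yV yW; set y := (V :&: orthc W)%MS => yV yW.
  have /sub_addsmxP[[a b] /= e] : (1%:M <= W + orthc V)%MS by case/andP: full.
  have h1 : y *m adjmx W = 0 by move/sub_kermxP: yW.
  have h2 : y *m adjmx (orthc V) = 0.
    by move/submxP: yV => [c ->]; rewrite -mulmxA hVO mulmx0.
  apply: mxadj_eq0; rewrite -{1}(mulmx1 y) -adjmx1 e adjmxD.
  rewrite (adjmxM a W) (adjmxM b (orthc V)) mulmxDr mulmxDl !mulmxA.
  by rewrite h1 h2 !mul0mx add0r.
split => //.
have rW : \rank W = \rank V.
  have /andP[_ ] := full; rewrite sub1mx /row_full => /eqP r1.
  have := mxrank_sum_cap W (orthc V); rewrite cap mxrank0 addn0 r1.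
  rewrite mxrank_ker mxrank_adj.
  have := rank_leq_col V; move=> le; lia.
rewrite /eqmx submx1 /= sub1mx /row_full.
have := mxrank_sum_cap V (orthc W); rewrite cap' mxrank0 addn0.
rewrite mxrank_ker mxrank_adj => ->; have := rank_leq_col W; move=> le; apply/eqP; lia.
Qed.

End LA.

Section Main.
Variable C : numClosedFieldType.
Variables (m N : nat) (W V : 'M[C]_m) (w v : 'I_N -> 'rV[C]_m).
Hypotheses (hds : direct_sum_perp W V) (hfw : is_frame_for W w)
  (hod : is_oblique_dual W V w v).

Definition Tw := \matrix_i w i.
Definition Tv := \matrix_i v i.
Let P := oblique_proj W V.
Let P' := oblique_proj V W.

Lemma cap1 : (W :&: orthc V)%MS = 0.
Proof. by case: hds => /eqmx0P. Qed.

Lemma TwW : (Tw == W)%MS. Proof. exact: frame_mx. Qed.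
Lemma TvV : (Tv == V)%MS. Proof. by case: hod => /frame_mx. Qed.

Lemma P_eq : P = adjmx Tv *m Tw.
Proof.
apply: mx_ext_row => f; rewrite /P (proj2 hod) mulmxA mulmx_sum_row.
apply: eq_bigr => i _; rewrite rowK; congr (_ *: _).
by rewrite /inprod !mxE; apply: eq_bigr => k _; rewrite !adjmxE !mxE.
Qed.

Lemma TwP : Tw *m P = Tw.
Proof. by rewrite /P proj_mx_id ?cap1 //; case/andP: TwW. Qed.

Lemma G_idem : (Tw *m adjmx Tv) *m (Tw *m adjmx Tv) = Tw *m adjmx Tv.
Proof. by rewrite !mulmxA -(mulmxA Tw) -P_eq TwP. Qed.

Lemma G_tr : \tr (Tw *m adjmx Tv) = (\rank W)%:R.
Proof.
rewrite mxtrace_mulC -P_eq tr_idem; last by rewrite /P proj_mx_proj // cap1.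
congr (_ %:R); apply: eqmx_rank; apply/andP; split.
  by rewrite -[P]mul1mx proj_mx_sub.
by rewrite -{1}(proj_mx_id (cap1) (submx_refl W)) submxMl.
Qed.

Lemma P'_eq : P' = adjmx Tw *m Tv.
Proof.
have [c2 f2] := dual_direct hds.
symmetry; apply: proj_uniq => //.
- have h : (1%:M - P) *m adjmx V = 0.
    apply/sub_kermxP; rewrite -{1}[P]mul1mx.
    by apply: proj_mx_compl_sub; case: hds => _ /andP[].
  have h2 : P *m adjmx V = adjmx V.
    apply/eqP; rewrite -subr_eq0.
    have -> : P *m adjmx V - adjmx V = - ((1%:M - P) *m adjmx V).
      by rewrite mulmxBl mul1mx opprB.
    by rewrite h oppr0.
  have hM : adjmx (adjmx Tw *m Tv) = P by rewrite adjmxM adjmxK -P_eq.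
  by rewrite -[LHS]adjmxK (adjmxM V) hM h2 adjmxK.
- rewrite mulmxA.
  suff -> : orthc W *m adjmx Tw = 0 by rewrite mul0mx.
  by apply: (orth_mul (orthc_mul W)); case/andP: TwW.
Qed.

Lemma frame_opE : frame_op w = adjmx Tw *m Tw.
Proof.
apply/matrixP => a b; rewrite /frame_op summxE !mxE; apply: eq_bigr => i _.
by rewrite mxE big_ord1 !adjmxE !mxE.
Qed.


Lemma herm_iff : adjmx (Tw *m adjmx Tv) = Tw *m adjmx Tv <->
  (forall j, v j = w j *m mpinv (frame_op w) *m P').
Proof.
have eS := frame_opE; set S := frame_op w in eS *.
have hS : adjmx S = S by rewrite eS adjmxM adjmxK.
have hX := mpinv_herm hS; have [X1 X2 X3 X4] := mpinv_spec S.
move: hX X1 X2 X3 X4; set X := mpinv S => hX X1 X2 X3 X4.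
have XSS : X *m (S *m S) = S.
  have e : X *m S = S *m X by rewrite -X4 adjmxM hS hX.
  by rewrite mulmxA e X1.
have TXS : Tw *m X *m S = Tw.
  set Z := Tw - Tw *m X *m S.
  have ZS : Z *m S = 0 by rewrite mulmxBl -!mulmxA XSS subrr.
  have M0 : Z *m adjmx Tw = 0.
    apply: mxadj_eq0; rewrite adjmxM adjmxK mulmxA -(mulmxA Z) -eS ZS mul0mx.
    by [].
  suff : Z = 0 by move/eqP; rewrite subr_eq0 => /eqP <-.
  apply: mxadj_eq0; rewrite {2}/Z adjmxB !adjmxM hS hX mulmxBr M0 sub0r.
  by rewrite (mulmxA Z) ZS mul0mx oppr0.
have eP' := P'_eq.
have hrow : (forall j, v j = w j *m X *m P') <-> Tv = Tw *m X *m P'.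
  split => [H|H j].
    by apply/row_matrixP => j; rewrite rowK !row_mul rowK; exact: H.
  by have := congr1 (row j) H; rewrite rowK !row_mul rowK.
rewrite hrow; split.
- move=> hG; set Y := Tv - Tw *m X *m P'.
  suff : Y = 0 by move/eqP; rewrite subr_eq0 => /eqP.
  have YV : (Y <= V)%MS.
    rewrite addmx_sub // ?eqmx_opp ?proj_mx_sub //.
    by case/andP: TvV.
  have YW : (Y <= orthc W)%MS.
    have e1 : Tv *m adjmx Tw = Tw *m adjmx Tv by rewrite -hG adjmxM adjmxK.
    have hY : Y *m adjmx Tw = 0.
      rewrite mulmxBl e1 eP' -!mulmxA e1 (mulmxA (adjmx Tw) Tw) -eS !mulmxA.
      by rewrite TXS subrr.
    apply/sub_kermxP; apply: (orth_mul hY).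
    by case/andP: TwW.
  apply/eqP; rewrite -submx0 -(proj1 (dual_direct hds)) sub_capmx YV YW.
  by [].
- move=> hT.
  have eG : Tw *m adjmx Tv = Tw *m X *m adjmx Tw.
    rewrite {1}hT eP' !adjmxM !adjmxK hX -P_eq mulmxA.
    by rewrite TwP mulmxA.
  by rewrite eG !adjmxM adjmxK hX mulmxA.
Qed.

End Main.

Section Frob.
Variable C : numClosedFieldType.

Lemma trMadj p q (M : 'M[C]_(p, q)) :
  \tr (M *m adjmx M) = \sum_i \sum_j `|M i j| ^+ 2.
Proof.
rewrite /mxtrace; apply: eq_bigr => i _; rewrite mxE; apply: eq_bigr => j _.
by rewrite adjmxE normCK.
Qed.

Lemma trMadj_eq0 p q (M : 'M[C]_(p, q)) : \tr (M *m adjmx M) = 0 -> M = 0.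
Proof.
rewrite trMadj => h; apply/matrixP => i j; rewrite mxE.
have h1 := @psumr_eq0P _ _ _ _ (fun i _ => @sumr_ge0 _ _ _ _ _ (fun j _ => exprn_ge0 2 (normr_ge0 (M i j)))) h i isT.
have := @psumr_eq0P _ _ _ _ (fun j _ => exprn_ge0 2 (normr_ge0 (M i j))) h1 j isT.
by move/eqP; rewrite sqrf_eq0 normr_eq0 => /eqP.
Qed.

Lemma tr_adj p (A : 'M[C]_p) : \tr (adjmx A) = (\tr A)^*.
Proof. by rewrite /adjmx mxtrace_tr /mxtrace rmorph_sum; apply: eq_bigr => i _; rewrite mxE. Qed.

Lemma frob p (G : 'M[C]_p) r : G *m G = G -> \tr G = r%:R ->
  2%:R * (\tr (G *m adjmx G) - r%:R) = \tr ((G - adjmx G) *m adjmx (G - adjmx G)).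
Proof.
move=> eGG trG.
have e1 : adjmx G *m adjmx G = adjmx G by rewrite -adjmxM eGG.
rewrite adjmxB adjmxK mulmxBr !mulmxBl e1 eGG.
rewrite !raddfB /= (mxtrace_mulC (adjmx G) G) tr_adj trG conjC_nat; ring.
Qed.

End Frob.

Section PM.
Variable R : numDomainType.
Variables (I : finType) (P : pred I) (x : I -> R).
Hypothesis x0 : forall i, P i -> 0 <= x i.

Let M : R := (#|P|)%:R.
Let Sp j := \sum_(i | P i) x i ^+ j.

Lemma sum_constP (c : R) : \sum_(i | P i) c = M * c.
Proof. by rewrite (@sumr_const _ _ P c) mulr_natl. Qed.

Lemma cheb_term a b j : 0 <= (x a - x b) * (x a ^+ j - x b ^+ j) ->
  True.
Proof. by []. Qed.

Lemma term_ge0 (a b : R) j : 0 <= a -> 0 <= b -> 0 <= (a - b) * (a ^+ j - b ^+ j).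
Proof.
move=> a0 b0; rewrite subrXX mulrA -expr2 mulr_ge0 //.
  by rewrite real_exprn_even_ge0 // rpredB // ger0_real.
by apply: sumr_ge0 => i _; rewrite mulr_ge0 ?exprn_ge0.
Qed.

Lemma term_eq0 (a b : R) j : 0 <= a -> 0 <= b -> (0 < j)%N ->
  (a - b) * (a ^+ j - b ^+ j) = 0 -> a = b.
Proof.
move=> a0 b0 j0; rewrite subrXX mulrA -expr2 => /eqP; rewrite mulf_eq0 sqrf_eq0.
rewrite subr_eq0 => /orP[/eqP //|/eqP hs].
have hz := psumr_eq0P (fun i _ => mulr_ge0 (exprn_ge0 _ a0) (exprn_ge0 _ b0)) hs.
have h1 := hz (Ordinal j0) isT; have h2 := hz (@Ordinal j j.-1 ltac:(rewrite prednK //)) isT.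
move: h1 h2 => /=; rewrite subn0 subnn !expr0 mulr1 mul1r.
move=> /eqP; rewrite expf_eq0 => /andP[_ /eqP ->].
by move=> /eqP; rewrite expf_eq0 => /andP[_ /eqP ->].
Qed.

Lemma cheb_id j : \sum_(a | P a) \sum_(b | P b) (x a - x b) * (x a ^+ j - x b ^+ j)
  = 2%:R * (M * Sp j.+1 - Sp 1 * Sp j).
Proof.
have e : forall a b, (x a - x b) * (x a ^+ j - x b ^+ j) =
   (x a ^+ j.+1 + x b ^+ j.+1) - (x a * x b ^+ j + x b * x a ^+ j).
  by move=> a b; rewrite !exprS; ring.
under eq_bigr do under eq_bigr do rewrite e.
under eq_bigr do rewrite sumrB big_split /= sum_constP.
rewrite sumrB big_split /= -mulr_sumr sum_constP.
have e2 : \sum_(a | P a) \sum_(b | P b) (x a * x b ^+ j + x b * x a ^+ j)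
    = 2%:R * (Sp 1 * Sp j).
  under eq_bigr do rewrite big_split /= -mulr_sumr -mulr_suml.
  rewrite big_split /= -mulr_suml -mulr_sumr.
  rewrite /Sp; under [\sum_(i | P i) x i ^+ 1]eq_bigr do rewrite expr1.
  ring.
rewrite e2 -/(Sp j.+1); ring.
Qed.


Lemma E_ge0 j : 0 <= M * Sp j.+1 - Sp 1 * Sp j.
Proof.
have h : 0 <= 2%:R * (M * Sp j.+1 - Sp 1 * Sp j).
  rewrite -cheb_id; apply: sumr_ge0 => a Pa; apply: sumr_ge0 => b Pb.
  exact: term_ge0 (x0 Pa) (x0 Pb).
by rewrite pmulr_rge0 ?ltr0n in h.
Qed.

Definition Dk k := M ^+ k * Sp k.+1 - Sp 1 ^+ k.+1.

Lemma D_rec k : Dk k.+1 = M ^+ k * (M * Sp k.+2 - Sp 1 * Sp k.+1) + Sp 1 * Dk k.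
Proof. rewrite /Dk !exprS; ring. Qed.

Lemma Sp_ge0 j : 0 <= Sp j.
Proof. by apply: sumr_ge0 => i Pi; rewrite exprn_ge0 ?x0. Qed.

Lemma D_ge0 k : 0 <= Dk k.
Proof.
elim: k => [|k IH]; first by rewrite /Dk expr0 mul1r expr1 subrr.
rewrite D_rec addr_ge0 ?mulr_ge0 ?exprn_ge0 ?ler0n ?E_ge0 ?Sp_ge0 //.
Qed.

Lemma D_eq0 k : Dk k.+1 = 0 -> forall a b, P a -> P b -> x a = x b.
Proof.
move=> h a b Pa Pb.
have Mn0 : M != 0.
  rewrite pnatr_eq0 -lt0n; apply/card_gt0P; by exists a.
move: h; rewrite D_rec => /eqP; rewrite paddr_eq0; last 2 first.
- by rewrite mulr_ge0 ?exprn_ge0 ?ler0n ?E_ge0.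
- by rewrite mulr_ge0 ?Sp_ge0 ?D_ge0.
case/andP; rewrite mulf_eq0 expf_eq0 (negbTE Mn0) andbF /= => /eqP hE _.
have hc := cheb_id k.+1; rewrite hE mulr0 in hc.
have hc3 := @psumr_eq0P _ _ _ _ (fun a' Pa' => @sumr_ge0 _ _ _ _ _ (fun b' Pb' => term_ge0 k.+1 (x0 Pa') (x0 Pb'))) hc a Pa.
apply: (term_eq0 (x0 Pa) (x0 Pb) (ltn0Sn k)).
exact: (@psumr_eq0P _ _ _ _ (fun b' Pb' => term_ge0 k.+1 (x0 Pa) (x0 Pb')) hc3 b Pb).
Qed.

Lemma D_const c k : (forall a, P a -> x a = c) -> Dk k = 0.
Proof.
move=> hc; have e : forall j, Sp j = M * c ^+ j.
  by move=> j; rewrite /Sp -sum_constP; apply: eq_bigr => i Pi; rewrite hc.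
by rewrite /Dk !e expr1 exprMn (exprSr M) mulrA subrr.
Qed.

End PM.

Section Core.
Variable C : numClosedFieldType.
Variables (N r k : nat) (G : 'M[C]_N) (i0 : 'I_N).
Hypotheses (hGG : G *m G = G) (htr : \tr G = r%:R)
  (hdiag : forall i j, G i i = G j j) (rN : (r <= N)%N) (k0 : (0 < k)%N).

Definition Pp := [pred p : 'I_N * 'I_N | p.2 != p.1].
Definition xx (p : 'I_N * 'I_N) := `|G p.1 p.2| ^+ 2.
Let M : C := (#|Pp|)%:R.
Let g := G i0 i0.
Let d : C := r%:R.

Lemma split_sum (f : 'I_N -> 'I_N -> C) :
  \sum_i \sum_j f i j = \sum_i f i i + \sum_(p | Pp p) f p.1 p.2.
Proof.
rewrite [LHS](eq_bigr (fun i => f i i + \sum_(j | j != i) f i j)) => [|i _]; last first.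
  by rewrite (bigD1 i).
rewrite big_split /=; congr (_ + _).
by rewrite (pair_big_dep predT (fun i j => j != i)).
Qed.

Lemma cardM : M = N%:R * (N%:R - 1).
Proof.
have h := split_sum (fun _ _ => 1).
rewrite !sumr_const card_ord in h.
have -> : M = N%:R *+ N - N%:R by rewrite h addrC addKr.
by rewrite -mulr_natr; ring.
Qed.

Lemma Npos : (0 < N)%N. Proof. by case: (N) i0 => [[]|]. Qed.
Lemma N0 : (N%:R : C) != 0. Proof. by rewrite pnatr_eq0 -lt0n Npos. Qed.

Lemma g_eq : g = d / N%:R.
Proof.
have : \tr G = g *+ N.
  by rewrite /mxtrace (eq_bigr (fun _ => g)) ?sumr_const ?card_ord // => i _; rewrite /g (hdiag i i0).
rewrite htr -(mulr_natl g) => h; by rewrite /d h (mulrC (N%:R)) mulfK ?N0.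
Qed.

Lemma g_ge0 : 0 <= g.
Proof. by rewrite g_eq divr_ge0 ?ler0n. Qed.


Let F := \sum_i \sum_j `|G i j| ^+ 2.
Let s := \sum_(p | Pp p) xx p.
Let a := d - d ^+ 2 / N%:R.

Lemma xx_ge0 p : Pp p -> 0 <= xx p.
Proof. by move=> _; rewrite exprn_ge0. Qed.

Lemma F_tr : F = \tr (G *m adjmx G). Proof. by rewrite trMadj. Qed.

Lemma F_frob : 2%:R * (F - d) = \tr ((G - adjmx G) *m adjmx (G - adjmx G)).
Proof. by rewrite F_tr frob. Qed.

Lemma F_ge : d <= F.
Proof.
have h : 0 <= 2%:R * (F - d).
  rewrite F_frob trMadj; apply: sumr_ge0 => i _; apply: sumr_ge0 => j _.
  exact: exprn_ge0.
by rewrite pmulr_rge0 ?ltr0n // subr_ge0 in h.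
Qed.

Lemma F_eq : F = d <-> adjmx G = G.
Proof.
split => [h|h].
  have : \tr ((G - adjmx G) *m adjmx (G - adjmx G)) = 0 by rewrite -F_frob h subrr mulr0.
  by move/trMadj_eq0/eqP; rewrite subr_eq0 => /eqP.
have : 2%:R * (F - d) = 0 by rewrite F_frob h subrr adjmx0 mulmx0 mxtrace0.
by move/eqP; rewrite mulf_eq0 pnatr_eq0 /= subr_eq0 => /eqP.
Qed.

Lemma diag_norm i : `|G i i| = g.
Proof. by rewrite (hdiag i i0) ger0_norm ?g_ge0. Qed.

Lemma F_split : F = N%:R * g ^+ 2 + s.
Proof.
rewrite /F split_sum; congr (_ + _).
by rewrite (eq_bigr (fun _ => g ^+ 2)) ?sumr_const ?card_ord ?mulr_natl // => i _; rewrite diag_norm.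
Qed.

Lemma s_a : s - a = F - d.
Proof.
rewrite F_split /a g_eq; field; exact: N0.
Qed.

Lemma a_ge0 : 0 <= a.
Proof.
have -> : a = d * (N%:R - d) / N%:R by rewrite /a; field; exact: N0.
by rewrite divr_ge0 ?ler0n // mulr_ge0 ?ler0n // subr_ge0 ler_nat.
Qed.

Lemma s_ge_a : a <= s.
Proof. by rewrite -subr_ge0 s_a subr_ge0 F_ge. Qed.

Lemma LHS_split : \sum_i \sum_j `|G i j| ^+ (2 * k) =
  N%:R * g ^+ (2 * k) + \sum_(p | Pp p) xx p ^+ k.
Proof.
rewrite split_sum; congr (_ + _).
  by rewrite (eq_bigr (fun _ => g ^+ (2 * k))) ?sumr_const ?card_ord ?mulr_natl // => i _; rewrite diag_norm.
by apply: eq_bigr => p _; rewrite /xx exprM.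
Qed.

Lemma RHS_eq :
  `|d - d ^+ 2 / N%:R| ^+ ((2 * k) %/ 2) /
     (N%:R ^+ ((2 * k) %/ 2 - 1) * (N%:R - 1) ^+ ((2 * k) %/ 2 - 1))
  + d ^+ (2 * k) / N%:R ^+ (2 * k - 1)
  = a ^+ k / M ^+ k.-1 + N%:R * g ^+ (2 * k).
Proof.
have e : ((2 * k) %/ 2 = k)%N by rewrite mulKn.
rewrite e subn1 -exprMn -cardM -/a ger0_norm ?a_ge0 //; congr (_ + _).
rewrite g_eq; have -> : (2 * k = (2 * k).-1.+1)%N by rewrite prednK // muln_gt0.
rewrite subn1 /= exprMn exprVn !exprS; field.
by rewrite expf_neq0 // N0.
Qed.


Let Sk := \sum_(p | Pp p) xx p ^+ k.

Lemma Dk_eq : Dk Pp xx k.-1 = M ^+ k.-1 * Sk - s ^+ k.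
Proof.
by rewrite /Dk prednK.
Qed.

Lemma chain : a ^+ k <= s ^+ k /\ s ^+ k <= M ^+ k.-1 * Sk.
Proof.
split; first by rewrite lerXn2r ?nnegrE ?a_ge0 ?s_ge_a // (le_trans a_ge0 s_ge_a).
by rewrite -subr_ge0 -Dk_eq; apply: D_ge0 => p; exact: xx_ge0.
Qed.

Lemma Sk_ge0 : 0 <= Sk.
Proof. by apply: sumr_ge0 => p _; rewrite exprn_ge0 ?exprn_ge0. Qed.

Lemma core_ineq : a ^+ k / M ^+ k.-1 <= Sk.
Proof.
have [-> |hM] := eqVneq (M ^+ k.-1) 0; first by rewrite invr0 mulr0 Sk_ge0.
have Mp : 0 < M ^+ k.-1 by rewrite lt_def hM exprn_ge0 ?ler0n.
rewrite ler_pdivrMr // mulrC; case: chain => h1 h2; exact: le_trans h1 h2.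
Qed.

Lemma core_eq : (1 < k)%N ->
  (Sk = a ^+ k / M ^+ k.-1 <-> (forall p q, Pp p -> Pp q -> xx p = xx q) /\ s = a).
Proof.
move=> k1.
have [M0|Mn0] := eqVneq M 0.
  have hP : Pp =1 xpred0.
    move=> p /=; apply/negP => Pp0; move: M0; rewrite /M => /eqP; rewrite pnatr_eq0 => /eqP.
    by move/card0_eq/(_ p); rewrite !inE /= => h; apply: Pp0; exact: negbFE h.
  have s0 : s = 0 by rewrite /s big_pred0.
  have Sk0 : Sk = 0 by rewrite /Sk big_pred0.
  have aa : a = 0 by apply/eqP; rewrite eq_le a_ge0 -s0 s_ge_a.
  rewrite M0 expr0n (_ : k.-1 == 0%N = false) ?invr0 ?mulr0; last by case: k k1 => [|[]].
  split => // _; split => [p q Pp0|]; first by move: Pp0 (hP p) => /= ->.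
  by rewrite s0 aa.
have Mp : 0 < M ^+ k.-1 by rewrite lt_def expf_neq0 // exprn_ge0 ?ler0n.
have Mn : M ^+ k.-1 != 0 by rewrite expf_neq0.
case: chain => h1 h2.
split => [h|[hc hs]].
  have e : M ^+ k.-1 * Sk = a ^+ k by rewrite h mulrC divfK.
  have e1 : s ^+ k = a ^+ k by apply/eqP; rewrite eq_le h1 -e h2.
  have e2 : Dk Pp xx k.-1 = 0 by rewrite Dk_eq e e1 subrr.
  split.
    move: e2; have -> : k.-1 = k.-2.+1 by case: k k1 => [|[]].
    by move/(D_eq0 (fun p => @xx_ge0 p)).
  by apply/eqP; rewrite -(eqrXn2 k0) ?e1 // ?(le_trans a_ge0 s_ge_a) ?a_ge0.
have [p0 Pp0] : exists p, Pp p.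
  move: Mn0; rewrite /M pnatr_eq0 -lt0n => /card_gt0P[p]; by exists p.
have e2 : Dk Pp xx k.-1 = 0 by apply: (@D_const _ _ _ _ (xx p0)) => p Pp1; exact: hc.
move: e2; rewrite Dk_eq hs => /eqP; rewrite subr_eq0 => /eqP e.
by rewrite -e (mulrC (M ^+ k.-1)) mulfK.
Qed.

End Core.

Theorem main_gen (C : numClosedFieldType) (n N k : nat) (W V : 'M[C]_n)
    (w v : 'I_N -> 'rV[C]_n) :
  direct_sum_perp W V ->
  is_frame_for W w ->
  is_oblique_dual W V w v ->
  (forall i j, inprod (w i) (v i) = inprod (w j) (v j)) ->
  (0 < k)%N ->
  let p := (2 * k)%N in
  let d : C := (\rank W)%:R in
  let LHS := \sum_(i < N) \sum_(j < N) `|inprod (w i) (v j)| ^+ p in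
  let RHS := `|d - d ^+ 2 / N%:R| ^+ (p %/ 2)
               / (N%:R ^+ (p %/ 2 - 1) * (N%:R - 1) ^+ (p %/ 2 - 1))
             + d ^+ p / N%:R ^+ (p - 1) in
  RHS <= LHS /\
  ((1 < k)%N ->
   (LHS = RHS <->
    (exists c, forall i j, i != j -> `|inprod (w i) (v j)| = c) /\
    (forall j, v j = w j *m mpinv (frame_op w) *m oblique_proj V W))).
Proof.
move=> hds hfw hod hw k0 p d LHS RHS.
set G := Tw w *m adjmx (Tv v).
have hG : forall i j, inprod (w i) (v j) = G i j.
  by move=> i j; rewrite /inprod !mxE; apply: eq_bigr => l _; rewrite !adjmxE !mxE.
have rN : (\rank W <= N)%N.
  by rewrite -(eqmx_rank (TwW hfw)); exact: rank_leq_row.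
have eL : LHS = \sum_(i < N) \sum_(j < N) `|G i j| ^+ (2 * k).
  by rewrite /LHS; apply: eq_bigr => i _; apply: eq_bigr => j _; rewrite hG.
case: (posnP N) => [N0|Npos].
  have r0 : \rank W = 0%N by lia.
  have L0 : LHS = 0 by rewrite eL big1 // => i; have := ltn_ord i; rewrite {2}N0.
  have R0 : RHS = 0.
    rewrite /RHS /d r0 expr0n /= mul0r subr0 normr0 !expr0n.
    have -> : (p %/ 2 == 0)%N = false by rewrite /p mulKn //; case: (k) k0.
    have -> : (p == 0)%N = false by rewrite /p; case: (k) k0.
    by rewrite !mul0r addr0.
  rewrite L0 R0; split => // _; split => // _; split.
    by exists 0 => i; have := ltn_ord i; rewrite {2}N0.
  by move=> j; have := ltn_ord j; rewrite {2}N0.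
pose i0 := Ordinal Npos.
have hGG : G *m G = G by exact: (G_idem hds hfw hod).
have htr : \tr G = (\rank W)%:R by exact: (G_tr hds hod).
have hdiag : forall i j, G i i = G j j by move=> i j; rewrite -!hG (hw i j).
have eR := RHS_eq i0 htr hdiag rN k0.
have eLs := LHS_split k i0 htr hdiag.
split.
  by rewrite /RHS eR eL eLs addrC lerD2l (core_ineq i0 hGG htr hdiag rN k0).
move=> k1.
rewrite /RHS eR eL eLs addrC; split.
  move/addIr => /(core_eq i0 hGG htr hdiag rN k0 k1) [hc hs].
  split.
    case: (pickP (Pp N)) => [p0 Pp0|none].
      exists `|G p0.1 p0.2| => i j ij; rewrite hG.
      have := hc (i, j) p0; rewrite /= eq_sym => /(_ ij Pp0).
      by rewrite /xx /= => /eqP; rewrite eqrXn2 // => /eqP.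
    by exists 0 => i j ij; have := none (i, j); rewrite /= eq_sym ij.
  apply/(herm_iff hds hfw hod)/(F_eq hGG htr).
  by apply/eqP; rewrite -subr_eq0 -(s_a i0 htr hdiag) hs subrr.
move=> [[c hc] hv]; congr (_ + _); apply/(core_eq i0 hGG htr hdiag rN k0 k1).
split.
  move=> p1 q1; rewrite /= /xx => h1 h2.
  by rewrite -!hG !hc // eq_sym.
have /(F_eq hGG htr) hF := proj2 (herm_iff hds hfw hod) hv.
by apply/eqP; rewrite -subr_eq0 (s_a i0 htr hdiag) hF subrr.
Qed.

Unset Implicit Arguments.

Theorem corollary3p6 (R : realType) (n N k : nat) (W V : 'M[R[i]]_n)
    (w v : 'I_N -> 'rV[R[i]]_n) :
  direct_sum_perp W V ->
  is_frame_for W w ->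
  is_oblique_dual W V w v ->
  (forall i j, inprod (w i) (v i) = inprod (w j) (v j)) ->
  (0 < k)%N ->
  let p := (2 * k)%N in
  let d : R[i] := (\rank W)%:R in
  let LHS := \sum_(i < N) \sum_(j < N) `|inprod (w i) (v j)| ^+ p in
  let RHS := `|d - d ^+ 2 / N%:R| ^+ (p %/ 2)
               / (N%:R ^+ (p %/ 2 - 1) * (N%:R - 1) ^+ (p %/ 2 - 1))
             + d ^+ p / N%:R ^+ (p - 1) in
  RHS <= LHS /\
  ((1 < k)%N ->
   (LHS = RHS <->
    (exists c, forall i j, i != j -> `|inprod (w i) (v j)| = c) /\
    (forall j, v j = w j *m mpinv (frame_op w) *m oblique_proj V W))).
Proof. exact: main_gen. Qed.
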